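(* Let $Q$ and $W$ satisfy the standing assumptions with $W=Y$, let $l\ge1$, and let $\mathcal R=\{(\zeta,\hat y)\in\hat X^{I^l_l}\times\hat X^{l\triangledown}:\zeta\in\hat y\}$. Then (i) $\mathcal R$ is a simulation relation from $\hat Q^{I^l_l}$ to $\hat Q^{l\triangledown}$ w.r.t. $Y$ if and only if $Q$ is domino consistent (for this $l$); and (ii) $\mathcal R^{-1}$ is a simulation relation from $\hat Q^{l\triangledown}$ to $\hat Q^{I^l_l}$ w.r.t. $Y$ if and only if $Q$ is future unique w.r.t. $I^l_l$.
   Context: Strings and signals: $\diamond$ is a symbol not in any other set considered. For a set $A$ and $l\in\mathbb N_0$, $A^l$ is the set of strings of length $l$ over $A$, indexed $\zeta=\zeta(0)\cdots\zeta(l-1)$; $\lambda$ is the empty string and $\cdot$ denotes concatenation. For a map $w$ on $\mathbb Z$ (or a string) and integers $t_1\le t_2$, $w|_{[t_1,t_2]}=w(t_1)\cdots w(t_2)$ is the string of length $t_2-t_1+1$ (absolute time forgotten); if $t_2<t_1$ it is $\lambda$. For a set $\mathcal S$ of such maps or strings, $\mathcal S|_{[t_1,t_2]}=\{s|_{[t_1,t_2]}:s\in\mathcal S\}$. State machines: a state machine is $Q=(X,U,Y,\delta,X_0)$ with $X_0\subseteq X$, $\delta\subseteq X\times U\times Y\times X$. Let $H_\delta(x)=\{y:\exists u,x'.\,(x,u,y,x')\in\delta\}$, $F_\delta(x,u)=\{x':\exists y\in H_\delta(x).\,(x,u,y,x')\in\delta\}$. The full behavior $\mathcal B_f(Q)$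 is the set of $(\mu,\nu,\xi)\in(U\times Y\times X)^{\mathbb N_0}$ with $\xi(0)\in X_0$ and $(\xi(k),\mu(k),\nu(k),\xi(k+1))\in\delta$ for all $k\in\mathbb N_0$. $Q$ is live and reachable if every $x\in X_0$ is $\xi(0)$ for some $(\mu,\nu,\xi)\in\mathcal B_f(Q)$ and every $x\in X$ is $\xi(k)$ for some such trajectory and some $k$. Standing assumptions: $Q=(X,U,Y,\delta,X_0)$ is live and reachable and satisfies $(x,u,y,x')\in\delta\iff(x'\in F_\delta(x,u)\wedge y\in H_\delta(x))$ for all $x,x'\in X,u\in U,y\in Y$; the external signal space $W$ is finite and either $W=U\times Y$ or $W=Y$ (here $W=Y$, with $\pi_W(u,y)=\pi_Y(u,y)=y$). Behaviors: $\mathcal B(Q)$ is the set of $w:\mathbb Z\to Y\cup\{\diamond\}$ such that for some $(\mu,\nu,\xi)\in\mathcal B_f(Q)$, $w(k)=\diamond$ for $k<0$ and $w(k)=\nu(k)$ for $k\ge0$. $\mathcal B_S(Q)$ is the set of pairs $(w,\xi)$ of maps on $\mathbb Z$ with $w(k)=\xi(k)=\diamond$ for $k<0$ and $(w(k),\xi(k))=(\nu(k),\xi'(k))$ for $k\ge0$, for some $(\mu,\nu,\xi')\in\mathcal B_f(Q)$. For a set $\mathcal B$ of maps on $\mathbb Z$, $\Pi_l(\mathcal B)=\bigcup_{k\in\mathbb N_0}\mathcal B|_{[k-l+1,k]}$. Corresponding strings: for integers $a,b$ and $x\in X$, $E^{[a,b]}(x)=\{\zeta:\exists(w,\xi)\in\mathcal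 B_S(Q),k\in\mathbb N_0:\ \xi(k)=x,\ \zeta=w|_{[k+a,k+b]}\}$. For $l,m\in\mathbb N_0$ with $m\le l$, $I^l_m=[m-l,m-1]$; in particular $I^l_l=[0,l-1]$. Future uniqueness: $Q$ is future unique w.r.t. $I^l_m$ if for all $x\in X$ and $\zeta,\zeta'\in E^{I^l_m}(x)$, $\zeta|_{[l-m,l-1]}=\zeta'|_{[l-m,l-1]}$. Abstract state machine: $\hat Q^{I^l_m}=(\hat X^{I^l_m},U,Y,\hat\delta^{I^l_m},\hat X^{I^l_m}_0)$ with $\hat X^{I^l_m}=\bigcup_{x\in X}E^{I^l_m}(x)$, $\hat X^{I^l_m}_0=\bigcup_{x\in X_0}E^{I^l_m}(x)$, and $(\hat x,u,y,\hat x')\in\hat\delta^{I^l_m}$ iff (1) $\hat x'|_{[0,l-m-1]}=(\hat x|_{[0,l-m-1]}\cdot\pi_W(u,y))|_{[1,l-m]}$, (2) $\hat x|_{[l-m,l-1]}=(\pi_W(u,y)\cdot\hat x'|_{[l-m,l-2]})|_{[0,m-1]}$, and (3) there are $x,x'\in X$ with $\hat x\in E^{I^l_m}(x)$, $\hat x'\in E^{I^l_m}(x')$, $(x,u,y,x')\in\delta$. Quotient state machine (for $W=Y$): $\hat Q^{l\triangledown}=(\hat X^{l\triangledown},U,Y,\hat\delta^{l\triangledown},\hat X^{l\triangledown}_0)$ with $\hat X^{l\triangledown}=\{E^{I^l_l}(x):x\in X\}$ (a set of subsets of $Y^l$), $\hat X^{l\triangledown}_0=\{E^{I^l_l}(x):x\in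 X_0\}$, and $(\hat x,u,y,\hat x')\in\hat\delta^{l\triangledown}$ iff there exist $x,x'\in X$ with $\hat x=E^{I^l_l}(x)$, $\hat x'=E^{I^l_l}(x')$ and $(x,u,y,x')\in\delta$. Domino consistency (for $W=Y$): $Q$ is domino consistent if for all $\zeta\in\Pi_{l+1}(\mathcal B(Q))$ and all $\hat y\in\hat X^{l\triangledown}$ with $\zeta|_{[0,l-1]}\in\hat y$ there exists $x\in X$ with $E^{I^l_l}(x)=\hat y$ and $\zeta\in E^{[0,l]}(x)$. Simulation relations: for state machines $Q_i=(X_i,U,Y,\delta_i,X_{0,i})$, $i=1,2$, and $V\in\{U\times Y,Y\}$, a relation $\mathcal R\subseteq X_1\times X_2$ is a simulation relation from $Q_1$ to $Q_2$ w.r.t. $V$ if (a) for every $x_1\in X_{0,1}$ there is $x_2\in X_{0,2}$ with $(x_1,x_2)\in\mathcal R$, and (b) for all $(x_1,x_2)\in\mathcal R$ and $(x_1,u_1,y_1,x_1')\in\delta_1$ there exist $u_2,y_2,x_2'$ with $(x_2,u_2,y_2,x_2')\in\delta_2$, $(x_1',x_2')\in\mathcal R$ and $\pi_V(u_1,y_1)=\pi_V(u_2,y_2)$. $\mathcal R^{-1}=\{(x_2,x_1):(x_1,x_2)\in\mathcal R\}$. *)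

(* Defs.v *)
From Stdlib Require Import ZArith List.
Import ListNotations.
Set Implicit Arguments.
Open Scope Z_scope.

(* The symbol ◇ is represented by [None]; a symbol a of A by [Some a]. *)

(* w|_[t1,t2] for a map w on Z: the string w(t1)...w(t2) (empty if t2 < t1). *)
Definition restr (A : Type) (w : Z -> A) (t1 t2 : Z) : list A :=
  map (fun i : nat => w (t1 + Z.of_nat i)) (seq 0 (Z.to_nat (t2 - t1 + 1))).

Definition str_fun (A : Type) (s : list (option A)) (i : Z) : option A :=
  if i <? 0 then None else nth (Z.to_nat i) s None.

Definition srestr (A : Type) (s : list (option A)) (t1 t2 : Z) : list (option A) :=
  restr (str_fun s) t1 t2.

Definition FiniteType (A : Type) : Prop := exists l : list A, forall a, In a l.

Definition sim_rel (U Y V S1 S2 : Type)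
  (d1 : S1 -> U -> Y -> S1 -> Prop) (i1 : S1 -> Prop)
  (d2 : S2 -> U -> Y -> S2 -> Prop) (i2 : S2 -> Prop)
  (pi : U -> Y -> V) (R : S1 -> S2 -> Prop) : Prop :=
  (forall x1, i1 x1 -> exists x2, i2 x2 /\ R x1 x2) /\
  (forall x1 x2 u1 y1 x1', R x1 x2 -> d1 x1 u1 y1 x1' ->
     exists u2 y2 x2', d2 x2 u2 y2 x2' /\ R x1' x2' /\ pi u1 y1 = pi u2 y2).

Definition pi_Y (U Y : Type) (u : U) (y : Y) : Y := y.

Section Machine.
Variables (X U Y : Type).
Variable delta : X -> U -> Y -> X -> Prop.
Variable X0 : X -> Prop.

Definition H_delta (x : X) (y : Y) : Prop := exists u x', delta x u y x'.
Definition F_delta (x : X) (u : U) (x' : X) : Prop :=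
  exists y, H_delta x y /\ delta x u y x'.

Definition full_behavior (mu : nat -> U) (nu : nat -> Y) (xi : nat -> X) : Prop :=
  X0 (xi 0%nat) /\ forall k, delta (xi k) (mu k) (nu k) (xi (S k)).

Definition live_reachable : Prop :=
  (forall x, X0 x -> exists mu nu xi, full_behavior mu nu xi /\ xi 0%nat = x) /\
  (forall x, exists mu nu xi k, full_behavior mu nu xi /\ xi k = x).

Definition delta_decomp : Prop :=
  forall x u y x', delta x u y x' <-> (F_delta x u x' /\ H_delta x y).

Definition behavior (w : Z -> option Y) : Prop :=
  exists mu nu xi, full_behavior mu nu xi /\
    (forall k, k < 0 -> w k = None) /\
    (forall k, 0 <= k -> w k = Some (nu (Z.to_nat k))).

Definition behavior_S (w : Z -> option Y) (xi : Z -> option X) : Prop :=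
  exists mu nu xi', full_behavior mu nu xi' /\
    (forall k, k < 0 -> w k = None /\ xi k = None) /\
    (forall k, 0 <= k -> w k = Some (nu (Z.to_nat k)) /\ xi k = Some (xi' (Z.to_nat k))).

Definition Pi (l : nat) (B : (Z -> option Y) -> Prop) (zeta : list (option Y)) : Prop :=
  exists w (k : nat), B w /\ zeta = restr w (Z.of_nat k - Z.of_nat l + 1) (Z.of_nat k).

Definition E (a b : Z) (x : X) (zeta : list (option Y)) : Prop :=
  exists w xi (k : nat), behavior_S w xi /\ xi (Z.of_nat k) = Some x /\
    zeta = restr w (Z.of_nat k + a) (Z.of_nat k + b).

Definition E_I (l m : nat) (x : X) : list (option Y) -> Prop :=
  E (Z.of_nat m - Z.of_nat l) (Z.of_nat m - 1) x.

Definition future_unique (l m : nat) : Prop :=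
  forall x zeta zeta', E_I l m x zeta -> E_I l m x zeta' ->
    srestr zeta (Z.of_nat l - Z.of_nat m) (Z.of_nat l - 1) =
    srestr zeta' (Z.of_nat l - Z.of_nat m) (Z.of_nat l - 1).

Definition Xhat (l m : nat) (z : list (option Y)) : Prop := exists x, E_I l m x z.
Definition Xhat0 (l m : nat) (z : list (option Y)) : Prop := exists x, X0 x /\ E_I l m x z.
Definition deltahat (l m : nat) (z : list (option Y)) (u : U) (y : Y)
    (z' : list (option Y)) : Prop :=
  let L := Z.of_nat l in let M := Z.of_nat m in
  srestr z' 0 (L - M - 1) = srestr (srestr z 0 (L - M - 1) ++ [Some y]) 1 (L - M) /\
  srestr z (L - M) (L - 1) = srestr (Some y :: srestr z' (L - M) (L - 2)) 0 (M - 1) /\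
  exists x x', E_I l m x z /\ E_I l m x' z' /\ delta x u y x'.

Definition Xq (l : nat) (P : list (option Y) -> Prop) : Prop := exists x, P = E_I l l x.
Definition Xq0 (l : nat) (P : list (option Y) -> Prop) : Prop :=
  exists x, X0 x /\ P = E_I l l x.
Definition deltaq (l : nat) (P : list (option Y) -> Prop) (u : U) (y : Y)
    (P' : list (option Y) -> Prop) : Prop :=
  exists x x', P = E_I l l x /\ P' = E_I l l x' /\ delta x u y x'.

Definition domino_consistent (l : nat) : Prop :=
  forall zeta, Pi (S l) behavior zeta ->
  forall P, Xq l P -> P (srestr zeta 0 (Z.of_nat l - 1)) ->
  exists x, E_I l l x = P /\ E 0 (Z.of_nat l) x zeta.

Definition Rel (l : nat) (z : list (option Y)) (P : list (option Y) -> Prop) : Prop :=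
  Xhat l l z /\ Xq l P /\ P z.
Definition Rel_inv (l : nat) (P : list (option Y) -> Prop) (z : list (option Y)) : Prop :=
  Rel l z P.

End Machine.

(* Main.v *)
Require Import Defs.
From Stdlib Require Import ZArith List Lia.
Import ListNotations.

Section Helpers.
Context {X U Y : Type} (delta : X -> U -> Y -> X -> Prop) (X0 : X -> Prop) (l : nat).

Definition fut (nu : nat -> Y) (k n : nat) : list (option Y) :=
  map (fun i => Some (nu (k + i)%nat)) (seq 0 n).

Definition canon {A : Type} (f : nat -> A) (z : Z) : option A :=
  if (z <? 0)%Z then None else Some (f (Z.to_nat z)).

Lemma fut_length nu k n : length (fut nu k n) = n.
Proof. unfold fut. rewrite length_map, length_seq. reflexivity. Qed.

Lemma fut_S nu k n : fut nu k (S n) = Some (nu k) :: fut nu (S k) n.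
Proof.
  unfold fut. simpl. rewrite Nat.add_0_r. f_equal.
  rewrite <- seq_shift, map_map. apply map_ext. intros; f_equal; f_equal; lia.
Qed.

Lemma nth_map_seq {A : Type} (f : nat -> A) n i d : (i < n)%nat -> nth i (map f (seq 0 n)) d = f i.
Proof.
  intros. rewrite nth_indep with (d' := f 0%nat) by (rewrite length_map, length_seq; lia).
  rewrite map_nth, seq_nth by lia. reflexivity.
Qed.

Lemma firstn_nth {A : Type} (s : list (option A)) n :
  (n <= length s)%nat -> firstn n s = map (fun i => nth i s None) (seq 0 n).
Proof.
  revert n; induction s as [|a s IH]; intros [|n] H; simpl in *; try reflexivity; try lia.
  f_equal. rewrite IH by lia. rewrite <- seq_shift, map_map. reflexivity.
Qed.

Lemma srestr0 {A : Type} (s : list (option A)) b :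
  srestr s 0 b = map (fun i => nth i s None) (seq 0 (Z.to_nat (b+1))).
Proof.
  unfold srestr, restr. replace (b - 0 + 1)%Z with (b+1)%Z by lia. apply map_ext. intro i.
  unfold str_fun. destruct (Z.ltb_spec (0 + Z.of_nat i) 0); [lia|]. f_equal. lia.
Qed.

Lemma srestr_firstn {A : Type} (s : list (option A)) n :
  (n <= length s)%nat -> srestr s 0 (Z.of_nat n - 1) = firstn n s.
Proof. intros. rewrite srestr0, firstn_nth by lia. f_equal. f_equal. lia. Qed.

Lemma srestr_full {A : Type} (s : list (option A)) n :
  length s = n -> srestr s 0 (Z.of_nat n - 1) = s.
Proof. intros. rewrite srestr_firstn by lia. apply firstn_all2. lia. Qed.

Lemma firstn_fut nu k n m : (n <= m)%nat -> firstn n (fut nu k m) = fut nu k n.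
Proof.
  intros. rewrite firstn_nth by (rewrite fut_length; lia). unfold fut at 2.
  apply map_ext_in. intros i Hi. apply in_seq in Hi. unfold fut.
  rewrite nth_map_seq by lia. reflexivity.
Qed.

Lemma fut_cons nu k n : (1 <= n)%nat -> fut nu k n = Some (nu k) :: firstn (n-1) (fut nu (S k) n).
Proof.
  intros. destruct n as [|n]; [lia|]. rewrite fut_S, firstn_fut by lia.
  replace (S n - 1)%nat with n by lia. reflexivity.
Qed.

Lemma firstn_mono {A : Type} (a b : list A) n m :
  (m <= n)%nat -> firstn n a = firstn n b -> firstn m a = firstn m b.
Proof.
  intros Hm H. replace m with (Nat.min m n) by lia.
  rewrite <- (firstn_firstn a m n), <- (firstn_firstn b m n), H. reflexivity.
Qed.

Lemma E_char b x zeta :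
  E delta X0 0 b x zeta <-> exists mu nu xi k, full_behavior delta X0 mu nu xi /\ xi k = x /\
     zeta = fut nu k (Z.to_nat (b+1)).
Proof.
  split.
  - intros (w & xs & k & (mu & nu & xi & Hfb & Hneg & Hpos) & Hx & Hz).
    exists mu, nu, xi, k. split; [exact Hfb|]. split.
    + destruct (Hpos (Z.of_nat k)) as [_ H2]; [lia|]. rewrite Hx, Nat2Z.id in H2. congruence.
    + subst zeta. unfold restr, fut.
      replace (Z.of_nat k + b - (Z.of_nat k + 0) + 1)%Z with (b+1)%Z by lia.
      apply map_ext. intro i.
      destruct (Hpos (Z.of_nat k + 0 + Z.of_nat i)%Z) as [H1 _]; [lia|].
      rewrite H1. f_equal. f_equal. lia.
  - intros (mu & nu & xi & k & Hfb & Hx & Hz).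
    exists (canon nu), (canon xi), k. split; [|split].
    + exists mu, nu, xi. split; [exact Hfb|]. split; intros z Hz'; unfold canon.
      * destruct (Z.ltb_spec z 0); [split; reflexivity|lia].
      * destruct (Z.ltb_spec z 0); [lia|split; reflexivity].
    + unfold canon. destruct (Z.ltb_spec (Z.of_nat k) 0); [lia|]. rewrite Nat2Z.id, Hx. reflexivity.
    + subst zeta. unfold restr, fut, canon.
      replace (Z.of_nat k + b - (Z.of_nat k + 0) + 1)%Z with (b+1)%Z by lia.
      apply map_ext. intro i. destruct (Z.ltb_spec (Z.of_nat k + 0 + Z.of_nat i) 0); [lia|].
      f_equal. f_equal. lia.
Qed.

Lemma EI_char x zeta :
  E_I delta X0 l l x zeta <-> exists mu nu xi k, full_behavior delta X0 mu nu xi /\ xi k = x /\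
     zeta = fut nu k l.
Proof.
  unfold E_I. rewrite Z.sub_diag, E_char.
  replace (Z.to_nat (Z.of_nat l - 1 + 1)) with l by lia. reflexivity.
Qed.

Lemma EL_char x zeta :
  E delta X0 0 (Z.of_nat l) x zeta <-> exists mu nu xi k, full_behavior delta X0 mu nu xi /\ xi k = x /\
     zeta = fut nu k (S l).
Proof.
  rewrite E_char. replace (Z.to_nat (Z.of_nat l + 1)) with (S l) by lia. reflexivity.
Qed.

Lemma EI_length x z : E_I delta X0 l l x z -> length z = l.
Proof. intros H. apply EI_char in H as (? & ? & ? & ? & _ & _ & ->). apply fut_length. Qed.

Lemma splice mu1 nu1 xi1 k0 x u y x' mu2 nu2 xi2 j :
  full_behavior delta X0 mu1 nu1 xi1 -> xi1 k0 = x -> delta x u y x' ->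
  full_behavior delta X0 mu2 nu2 xi2 -> xi2 j = x' ->
  exists mu nu xi, full_behavior delta X0 mu nu xi /\ xi k0 = x /\ nu k0 = y /\
    forall t, nu (S k0 + t)%nat = nu2 (j + t)%nat.
Proof.
  intros [H10 H1] Hx Hd [H20 H2] Hx'.
  exists (fun i => if (i <? k0)%nat then mu1 i else if (i =? k0)%nat then u else mu2 (i - S k0 + j)%nat).
  exists (fun i => if (i <? k0)%nat then nu1 i else if (i =? k0)%nat then y else nu2 (i - S k0 + j)%nat).
  exists (fun i => if (i <=? k0)%nat then xi1 i else xi2 (i - S k0 + j)%nat).
  split; [split|split; [|split]].
  - cbv beta. destruct (Nat.leb_spec 0 k0); [exact H10|lia].
  - intro i. cbv beta. destruct (Nat.ltb_spec i k0).
    + destruct (Nat.leb_spec i k0); [|lia]. destruct (Nat.leb_spec (S i) k0); [|lia]. apply H1.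
    + destruct (Nat.eqb_spec i k0).
      * subst i. destruct (Nat.leb_spec k0 k0); [|lia]. destruct (Nat.leb_spec (S k0) k0); [lia|].
        replace (S k0 - S k0 + j)%nat with j by lia. rewrite Hx, Hx'. exact Hd.
      * destruct (Nat.leb_spec i k0); [lia|]. destruct (Nat.leb_spec (S i) k0); [lia|].
        replace (S i - S k0 + j)%nat with (S (i - S k0 + j)) by lia. apply H2.
  - cbv beta. destruct (Nat.leb_spec k0 k0); [exact Hx|lia].
  - cbv beta. destruct (Nat.ltb_spec k0 k0); [lia|]. rewrite Nat.eqb_refl. reflexivity.
  - intro t. cbv beta. destruct (Nat.ltb_spec (S k0 + t) k0); [lia|].
    destruct (Nat.eqb_spec (S k0 + t) k0); [lia|]. f_equal. lia.
Qed.

Lemma step_ext (HR : live_reachable delta X0) x u y x' z' :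
  delta x u y x' -> E_I delta X0 l l x' z' -> E delta X0 0 (Z.of_nat l) x (Some y :: z').
Proof.
  intros Hd Hz. destruct (proj2 HR x) as (mu1 & nu1 & xi1 & k0 & Hfb1 & Hx1).
  apply EI_char in Hz as (mu2 & nu2 & xi2 & j & Hfb2 & Hx2 & ->).
  destruct (splice _ _ _ _ _ _ _ _ _ _ _ _ Hfb1 Hx1 Hd Hfb2 Hx2) as (mu & nu & xi & Hfb & Hk & Hy & Ht).
  apply EL_char. exists mu, nu, xi, k0. split; [exact Hfb|]. split; [exact Hk|].
  rewrite fut_S, Hy. f_equal. unfold fut. apply map_ext. intro i. rewrite Ht. reflexivity.
Qed.

Lemma EI_nonempty (HR : live_reachable delta X0) x : exists z, E_I delta X0 l l x z.
Proof.
  destruct (proj2 HR x) as (mu & nu & xi & k & Hfb & Hx).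
  exists (fut nu k l). apply EI_char. exists mu, nu, xi, k. auto.
Qed.

Lemma deltahat_char (Hl : (1 <= l)%nat) z u y z' :
  deltahat delta X0 l l z u y z' <->
  z = Some y :: firstn (l-1) z' /\ exists x x', E_I delta X0 l l x z /\ E_I delta X0 l l x' z' /\ delta x u y x'.
Proof.
  unfold deltahat. cbv zeta. rewrite Z.sub_diag.
  replace (Z.of_nat l - 2)%Z with (Z.of_nat (l-1) - 1)%Z by lia.
  split.
  - intros (_ & H2 & x & x' & Hx & Hx' & Hd).
    pose proof (EI_length _ _ Hx). pose proof (EI_length _ _ Hx').
    rewrite (srestr_firstn z' (l-1)) in H2 by lia.
    assert (length (Some y :: firstn (l-1) z') = l) by (simpl; rewrite length_firstn; lia).
    rewrite (srestr_full z l), (srestr_full (Some y :: firstn (l-1) z') l) in H2 by assumption.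
    split; [exact H2|]. exists x, x'. auto.
  - intros (Hz & x & x' & Hx & Hx' & Hd).
    pose proof (EI_length _ _ Hx'). split; [reflexivity|]. split; [|exists x, x'; auto].
    rewrite (srestr_firstn z' (l-1)) by lia.
    assert (length (Some y :: firstn (l-1) z') = l) by (simpl; rewrite length_firstn; lia).
    subst z. reflexivity.
Qed.

Lemma Pi_elim (Hl : (1 <= l)%nat) zeta P :
  Pi (S l) (behavior delta X0) zeta -> Xq delta X0 l P -> P (srestr zeta 0 (Z.of_nat l - 1)) ->
  exists mu nu xi s, full_behavior delta X0 mu nu xi /\ zeta = fut nu s (S l).
Proof.
  intros (w & k & (mu & nu & xi & Hfb & Hneg & Hpos) & Hz) (x0 & ->) HP.
  apply EI_char in HP as (mu0 & nu0 & xi0 & k0 & _ & _ & Hf).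
  assert (Hz' : zeta = map (fun i => w (Z.of_nat k - Z.of_nat (S l) + 1 + Z.of_nat i)%Z) (seq 0 (S l))).
  { rewrite Hz. unfold restr. f_equal. f_equal. lia. }
  destruct (Nat.ltb_spec k l).
  - exfalso. rewrite srestr0 in Hf. replace (Z.to_nat (Z.of_nat l - 1 + 1)) with l in Hf by lia.
    assert (H0 := f_equal (fun s => nth 0 s None) Hf). cbv beta in H0.
    rewrite nth_map_seq in H0 by lia. unfold fut in H0. rewrite nth_map_seq in H0 by lia.
    rewrite Hz' in H0. rewrite nth_map_seq in H0 by lia. rewrite Hneg in H0 by lia. discriminate.
  - exists mu, nu, xi, (k - l)%nat. split; [exact Hfb|]. rewrite Hz'. unfold fut. apply map_ext.
    intro i. rewrite Hpos by lia. f_equal. f_equal. lia.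
Qed.

Lemma Pi_intro mu nu xi k :
  full_behavior delta X0 mu nu xi -> Pi (S l) (behavior delta X0) (fut nu k (S l)).
Proof.
  intros Hfb. exists (canon nu), (k + l)%nat. split.
  - exists mu, nu, xi. split; [exact Hfb|]. split; intros z Hz'; unfold canon.
    + destruct (Z.ltb_spec z 0); [reflexivity|lia].
    + destruct (Z.ltb_spec z 0); [lia|reflexivity].
  - unfold restr, fut, canon.
    replace (Z.to_nat (Z.of_nat (k + l) - (Z.of_nat (k + l) - Z.of_nat (S l) + 1) + 1)) with (S l) by lia.
    apply map_ext. intro i.
    destruct (Z.ltb_spec (Z.of_nat (k + l) - Z.of_nat (S l) + 1 + Z.of_nat i) 0); [lia|].
    f_equal. f_equal. lia.
Qed.

End Helpers.

Theorem theorem9 (X U Y : Type) (delta : X -> U -> Y -> X -> Prop) (X0 : X -> Prop)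
  (l : nat) :
  FiniteType Y ->
  live_reachable delta X0 ->
  delta_decomp delta ->
  (1 <= l)%nat ->
  (sim_rel (deltahat delta X0 l l) (Xhat0 delta X0 l l)
      (deltaq delta X0 l) (Xq0 delta X0 l)
      (@pi_Y U Y) (Rel delta X0 l)
   <-> domino_consistent delta X0 l) /\
  (sim_rel (deltaq delta X0 l) (Xq0 delta X0 l)
      (deltahat delta X0 l l) (Xhat0 delta X0 l l)
      (@pi_Y U Y) (Rel_inv delta X0 l)
   <-> future_unique delta X0 l l).
Proof.
  intros _ HR _ Hl. split; split.
  - intros [_ Hstep] zeta HPi P HXq HP.
    destruct (Pi_elim _ _ _ Hl _ _ HPi HXq HP) as (mu & nu & xi & s & Hfb & Hzeta).
    assert (Hz : srestr zeta 0 (Z.of_nat l - 1) = fut nu s l).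
    { rewrite Hzeta, srestr_firstn by (rewrite fut_length; lia). apply firstn_fut. lia. }
    rewrite Hz in HP.
    assert (HEz : E_I delta X0 l l (xi s) (fut nu s l)) by (apply EI_char; exists mu, nu, xi, s; auto).
    assert (HEz' : E_I delta X0 l l (xi (S s)) (fut nu (S s) l))
      by (apply EI_char; exists mu, nu, xi, (S s); auto).
    assert (Hdh : deltahat delta X0 l l (fut nu s l) (mu s) (nu s) (fut nu (S s) l)).
    { apply deltahat_char; [exact Hl|]. split; [apply fut_cons; exact Hl|].
      exists (xi s), (xi (S s)). split; [exact HEz|split; [exact HEz'|apply (proj2 Hfb)]]. }
    assert (HRel : Rel delta X0 l (fut nu s l) P).
    { split; [exists (xi s); exact HEz|split; [exact HXq|exact HP]]. }
    destruct (Hstep _ _ _ _ _ HRel Hdh) as (u2 & y2 & P' & (x & x' & HPx & HP'x & Hd) & (_ & _ & HP') & Hy).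
    unfold pi_Y in Hy. subst P P'.
    exists x. split; [reflexivity|]. rewrite Hzeta, fut_S, Hy. exact (step_ext _ _ _ HR _ _ _ _ _ Hd HP').
  - intros HD. split.
    + intros z (x & HX0 & Hz). exists (E_I delta X0 l l x). split; [exists x; auto|].
      split; [exists x; exact Hz|split; [exists x; reflexivity|exact Hz]].
    + intros z P u y z' (_ & HXq & HPz) Hdh.
      apply deltahat_char in Hdh as (Hzeq & x1 & x1' & Hx1 & Hx1' & Hd); [|exact Hl].
      pose proof (step_ext _ _ _ HR _ _ _ _ _ Hd Hx1') as HE.
      assert (HPi : Pi (S l) (behavior delta X0) (Some y :: z')).
      { apply EL_char in HE as (mu & nu & xi & k & Hfb & _ & Heq). rewrite Heq.
        exact (Pi_intro _ _ _ _ _ _ _ Hfb). }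
      assert (Hsr : srestr (Some y :: z') 0 (Z.of_nat l - 1) = z).
      { pose proof (EI_length _ _ _ _ _ Hx1').
        rewrite srestr_firstn by (simpl; lia). rewrite Hzeq.
        replace l with (S (l-1)) at 1 by lia. reflexivity. }
      rewrite <- Hsr in HPz. destruct (HD _ HPi P HXq HPz) as (x & HPx & HEx).
      apply EL_char in HEx as (mu & nu & xi & k & Hfb & Hxk & Heq).
      rewrite fut_S in Heq. injection Heq as Hy Hz'.
      exists (mu k), y, (E_I delta X0 l l (xi (S k))). split; [|split].
      * exists x, (xi (S k)). split; [symmetry; exact HPx|split; [reflexivity|]].
        rewrite <- Hxk, Hy. apply (proj2 Hfb).
      * split; [exists x1'; exact Hx1'|split; [exists (xi (S k)); reflexivity|]].
        rewrite Hz'. apply EI_char. exists mu, nu, xi, (S k). auto.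
      * reflexivity.
  - intros [_ Hstep].
    assert (Hclaim : forall n x zeta zeta', E_I delta X0 l l x zeta -> E_I delta X0 l l x zeta' ->
                       firstn n zeta = firstn n zeta').
    { induction n as [|n IH]; intros x zeta zeta' H H'; [reflexivity|].
      apply EI_char in H as (mu & nu & xi & k & Hfb & Hxk & Hzeta).
      assert (HRel : Rel_inv delta X0 l (E_I delta X0 l l x) zeta').
      { split; [exists x; exact H'|split; [exists x; reflexivity|exact H']]. }
      assert (Hdq : deltaq delta X0 l (E_I delta X0 l l x) (mu k) (nu k) (E_I delta X0 l l (xi (S k)))).
      { exists x, (xi (S k)). split; [reflexivity|split; [reflexivity|]].
        rewrite <- Hxk. apply (proj2 Hfb). }
      destruct (Hstep _ _ _ _ _ HRel Hdq) as (u2 & y2 & z'' & Hdh & (_ & _ & Hz'') & Hy).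
      unfold pi_Y in Hy. apply deltahat_char in Hdh as (Hzeta' & _); [|exact Hl].
      assert (HE1 : E_I delta X0 l l (xi (S k)) (fut nu (S k) l))
        by (apply EI_char; exists mu, nu, xi, (S k); auto).
      specialize (IH _ _ _ HE1 Hz'').
      rewrite Hzeta, Hzeta', (fut_cons nu k l Hl), <- Hy. simpl. f_equal.
      rewrite !firstn_firstn. apply (firstn_mono _ _ n); [lia|exact IH]. }
    intros x zeta zeta' H H'. rewrite Z.sub_diag.
    pose proof (EI_length _ _ _ _ _ H). pose proof (EI_length _ _ _ _ _ H').
    rewrite (srestr_firstn zeta l), (srestr_firstn zeta' l) by lia.
    exact (Hclaim l x zeta zeta' H H').
  - intros HFU.
    assert (Heq : forall x z z', E_I delta X0 l l x z -> E_I delta X0 l l x z' -> z = z').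
    { intros x z z' H H'. pose proof (HFU _ _ _ H H') as H1.
      pose proof (EI_length _ _ _ _ _ H). pose proof (EI_length _ _ _ _ _ H').
      rewrite Z.sub_diag, (srestr_full z l), (srestr_full z' l) in H1 by assumption. exact H1. }
    split.
    + intros P (x & HX0 & ->). destruct (EI_nonempty _ _ l HR x) as [z Hz]. exists z.
      split; [exists x; auto|]. split; [exists x; exact Hz|split; [exists x; reflexivity|exact Hz]].
    + intros P z u y P' (_ & (x0 & ->) & Hz) (x & x' & HPx & HP'x & Hd). subst P'.
      rewrite HPx in Hz.
      destruct (EI_nonempty _ _ l HR x') as [z' Hz'].
      pose proof (step_ext _ _ _ HR _ _ _ _ _ Hd Hz') as HE.
      apply EL_char in HE as (mu & nu & xi & k & Hfb & Hxk & Hf).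
      assert (HEp : E_I delta X0 l l x (fut nu k l))
        by (apply EI_char; exists mu, nu, xi, k; auto).
      assert (Hzf : z = fut nu k l) by (exact (Heq _ _ _ Hz HEp)).
      assert (Hfc : fut nu k l = Some y :: firstn (l-1) z').
      { rewrite <- (firstn_fut nu k l (S l)) by lia. rewrite <- Hf.
        replace l with (S (l-1)) at 1 by lia. reflexivity. }
      exists u, y, z'. split; [|split].
      * apply deltahat_char; [exact Hl|]. split; [congruence|]. exists x, x'.
        split; [exact Hz|split; [exact Hz'|exact Hd]].
      * split; [exists x'; exact Hz'|split; [exists x'; reflexivity|exact Hz']].
      * reflexivity.
Qed.
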